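(* Let $\Lambda=KQ/I$ be a finite dimensional string algebra over a field $K$ whose quiver $Q$ has a tree as underlying graph, and let $i\in Q_0$ be a vertex at which exactly two arrows start. Then $P(i)\not\cong C(f)$ for every irreducible monomorphism $f:X\to P(i)$ with $X$ indecomposable.
   Context: $K$ is a field, $Q$ a finite quiver with vertex set $Q_0$ and arrows $Q_1$, paths written right to left. $\Lambda=KQ/I$ with $I$ either $0$ or an admissible ideal, and $\Lambda$ is a string algebra: (i) at each vertex at most two arrows start and at most two end; (ii) if $\alpha\neq\beta,\gamma$ are arrows with $e(\alpha)=e(\beta)=s(\gamma)$ then $\gamma\alpha\in I$ or $\gamma\beta\in I$; (iii) if $\alpha\neq\beta,\gamma$ are arrows with $s(\alpha)=s(\beta)=e(\gamma)$ then $\alpha\gamma\in I$ or $\beta\gamma\in I$; (iv) $I$ is generated by paths. $\operatorname{mod}\Lambda$ is the category of finitely generated left $\Lambda$-modules, $\tau$ the Auslander–Reiten translation, $P(i)$ the indecomposable projective module at $i$. For $f:B\to C$ write $B=B_1\oplus B_2$ with $B_1\subseteq\operatorname{Ker}f$ and $f|_{B_2}$ right minimal; $\operatorname{Ker}(f|_{B_2})$ is the intrinsic kernel of $f$. An indecomposable projective $P$ almost factors through $f:M\to N$ if there are $h:P\to N$ and $g:\operatorname{rad}P\to M$ with $h|_{\operatorname{rad}P}=fg$ and $\operatorname{Im}h\not\subseteq\operatorname{Im}f$. The minimal right determiner $C(f)$ is the direct sum of the modules $\tau^{-1}L$, $L$ running over the indecomposable direct summands of the intrinsic kernel of $f$,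 and of the indecomposable projective modules almost factoring through $f$, one from each isomorphism class. *)

(* Defs.v *)
From HB Require Import structures.
From mathcomp Require Import all_boot all_algebra.
Set Implicit Arguments. Unset Strict Implicit. Unset Printing Implicit Defensive.
Import GRing.Theory.
Local Open Scope ring_scope.

Section Quiver.
Variables (V A : finType) (s t : A -> V).

(* A path is a list of arrows in the order they are traversed:
   [:: a1; a2; ...; ak] with t a_j = s a_(j+1); this is the path
   a_k ... a_2 a_1 in the paper's right-to-left notation. *)
Fixpoint composable (p : seq A) : bool :=
  match p with
  | a :: ((b :: _) as p') => (t a == s b) && composable p'
  | _ => true
  end.

Definition in_ideal (rels : seq (seq A)) (p : seq A) : bool :=
  has (fun r => infix r p) rels.

(* I = 0, or I is admissible (R^m <= I <= R^2) *)
Definition admissible_or_zero (rels : seq (seq A)) : Prop :=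
  rels = [::] \/
  ((forall r, r \in rels -> composable r && (2 <= size r)%N) /\
   exists m : nat, forall p, composable p -> size p = m -> in_ideal rels p).

Definition string_algebra (rels : seq (seq A)) : Prop :=
  (forall v : V, #|[set a | s a == v]| <= 2 /\ #|[set a | t a == v]| <= 2)%N /\
  (forall al be ga : A, al != be -> t al = s ga -> t be = s ga ->
     in_ideal rels [:: al; ga] \/ in_ideal rels [:: be; ga]) /\
  (forall al be ga : A, al != be -> s al = t ga -> s be = t ga ->
     in_ideal rels [:: ga; al] \/ in_ideal rels [:: ga; be]).

Definition undirected_adj : rel V :=
  fun x y => [exists a, ((s a == x) && (t a == y)) || ((s a == y) && (t a == x))].

Definition is_tree : Prop :=
  (forall x y, connect undirected_adj x y) /\ #|A|.+1 = #|V|.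

End Quiver.

Section Reps.
Variables (K : fieldType) (V A : finType) (s t : A -> V).

(* representations: vector spaces K^(rdim v), arrows acting on row vectors *)
Record rep := Rep {
  rdim : V -> nat;
  rmat : forall a : A, 'M[K]_(rdim (s a), rdim (t a)) }.

Fixpoint killed (M : rep) (m : nat) (x : V) (N : 'M[K]_(m, rdim M x))
  (p : seq A) {struct p} : bool :=
  match p with
  | [::] => N == 0
  | a :: p' =>
    match (x =P s a) with
    | ReflectT e => killed (castmx (erefl m, congr1 (rdim M) e) N *m rmat M a) p'
    | ReflectF _ => true
    end
  end.

Definition isMod (rels : seq (seq A)) (M : rep) : Prop :=
  forall r, r \in rels ->
    match r with
    | a :: _ => killed (1%:M : 'M[K]_(rdim M (s a))) r
    | [::] => true
    end.

Definition homT (M N : rep) := forall v : V, 'M[K]_(rdim M v, rdim N v).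
Definition is_hom (M N : rep) (f : homT M N) : Prop :=
  forall a : A, rmat M a *m f (t a) = f (s a) *m rmat N a.
(* composition: first f, then g *)
Definition hcomp (M N P : rep) (f : homT M N) (g : homT N P) : homT M P :=
  fun v => f v *m g v.
Definition hid (M : rep) : homT M M := fun v => 1%:M.
Definition hzero (M N : rep) : homT M N := fun v => 0.
Definition heq (M N : rep) (f g : homT M N) : Prop := forall v, f v = g v.

Definition mono (M N : rep) (f : homT M N) : Prop := forall v, row_free (f v).
Definition epi (M N : rep) (f : homT M N) : Prop := forall v, row_full (f v).
Definition split_mono (M N : rep) (f : homT M N) : Prop :=
  exists r : homT N M, is_hom r /\ heq (hcomp f r) (hid M).
Definition split_epi (M N : rep) (f : homT M N) : Prop :=
  exists r : homT N M, is_hom r /\ heq (hcomp r f) (hid N).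
Definition is_iso_hom (M N : rep) (f : homT M N) : Prop :=
  is_hom f /\ exists g : homT N M, is_hom g /\
    heq (hcomp f g) (hid M) /\ heq (hcomp g f) (hid N).
Definition iso (M N : rep) : Prop := exists f : homT M N, is_iso_hom f.

Definition nonzero (M : rep) : Prop := exists v, (0 < rdim M v)%N.
Definition indecomposable (M : rep) : Prop :=
  nonzero M /\ forall e : homT M M, is_hom e -> heq (hcomp e e) e ->
    heq e (hzero M M) \/ heq e (hid M).

Definition irreducible (rels : seq (seq A)) (M N : rep) (f : homT M N) : Prop :=
  ~ split_mono f /\ ~ split_epi f /\
  forall (Y : rep) (g : homT M Y) (h : homT Y N),
    isMod rels Y -> is_hom g -> is_hom h -> heq (hcomp g h) f ->
    split_mono g \/ split_epi h.

Definition projective (rels : seq (seq A)) (P : rep) : Prop :=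
  forall (X Y : rep) (p : homT X Y) (h : homT P Y),
    isMod rels X -> isMod rels Y -> is_hom p -> is_hom h -> epi p ->
    exists g : homT P X, is_hom g /\ heq (hcomp g p) h.
Definition injective (rels : seq (seq A)) (I : rep) : Prop :=
  forall (X Y : rep) (m : homT X Y) (h : homT X I),
    isMod rels X -> isMod rels Y -> is_hom m -> is_hom h -> mono m ->
    exists g : homT Y I, is_hom g /\ heq (hcomp m g) h.

Definition simple_rep (i : V) : rep :=
  @Rep (fun j => nat_of_bool (j == i)) (fun a => 0).

Definition is_Pi (rels : seq (seq A)) (i : V) (P : rep) : Prop :=
  isMod rels P /\ indecomposable P /\ projective rels P /\
  exists f : homT P (simple_rep i), is_hom f /\ ~ heq f (hzero _ _).

Definition zero_rep : rep := @Rep (fun _ => 0%N) (fun _ => 0).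
Definition dsum (M N : rep) : rep :=
  @Rep (fun v => (rdim M v + rdim N v)%N)
       (fun a => block_mx (rmat M a) 0 0 (rmat N a)).
Definition bigsum (Ms : seq rep) : rep := foldr dsum zero_rep Ms.
Definition inl_hom (M N : rep) : homT M (dsum M N) := fun v => row_mx 1%:M 0.
Definition inr_hom (M N : rep) : homT N (dsum M N) := fun v => row_mx 0 1%:M.

(* iota : R -> P is a monomorphism with image rad P = (arrow ideal) P,
   i.e. the smallest family of subspaces containing the images of all arrows *)
Definition is_rad_incl (P R : rep) (iota : homT R P) : Prop :=
  is_hom iota /\ mono iota /\
  (forall a : A, (rmat P a <= iota (t a))%MS) /\
  (forall U : forall v, 'M[K]_(rdim P v),
     (forall a : A, (rmat P a <= U (t a))%MS) -> forall v, (iota v <= U v)%MS).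

Definition almost_factors (rels : seq (seq A)) (M N : rep) (f : homT M N)
  (P : rep) : Prop :=
  isMod rels P /\ indecomposable P /\ projective rels P /\
  exists (R : rep) (iota : homT R P) (h : homT P N) (g : homT R M),
    isMod rels R /\ is_rad_incl iota /\ is_hom h /\ is_hom g /\
    heq (hcomp iota h) (hcomp g f) /\ exists v, ~~ (h v <= f v)%MS.

Definition right_minimal (B C : rep) (f : homT B C) : Prop :=
  forall phi : homT B B, is_hom phi -> heq (hcomp phi f) f -> is_iso_hom phi.

Definition is_kernel (L B C : rep) (k : homT L B) (f : homT B C) : Prop :=
  is_hom k /\ mono k /\ heq (hcomp k f) (hzero L C) /\
  forall v, (\rank (k v) + \rank (f v))%N = rdim B v.

Definition intrinsic_kernel (rels : seq (seq A)) (B C : rep) (f : homT B C)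
  (L : rep) : Prop :=
  isMod rels L /\
  exists (B1 B2 : rep) (phi : homT (dsum B1 B2) B) (k : homT L B2),
    isMod rels B1 /\ isMod rels B2 /\ is_iso_hom phi /\
    heq (hcomp (inl_hom B1 B2) (hcomp phi f)) (hzero B1 C) /\
    right_minimal (hcomp (inr_hom B1 B2) (hcomp phi f)) /\
    is_kernel k (hcomp (inr_hom B1 B2) (hcomp phi f)).

Definition almost_split (rels : seq (seq A)) (L E N : rep)
  (u : homT L E) (p : homT E N) : Prop :=
  isMod rels E /\ is_hom u /\ is_hom p /\ mono u /\ epi p /\
  heq (hcomp u p) (hzero L N) /\
  (forall v, (\rank (u v) + \rank (p v))%N = rdim E v) /\
  ~ split_mono u /\ ~ split_epi p /\
  (forall (Y : rep) (g : homT L Y), isMod rels Y -> is_hom g -> ~ split_mono g ->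
     exists g' : homT E Y, is_hom g' /\ heq (hcomp u g') g) /\
  (forall (Y : rep) (g : homT Y N), isMod rels Y -> is_hom g -> ~ split_epi g ->
     exists g' : homT Y E, is_hom g' /\ heq (hcomp g' p) g).

Definition tau_inv (rels : seq (seq A)) (L N : rep) : Prop :=
  (injective rels L /\ iso N zero_rep) \/
  (~ injective rels L /\ exists (E : rep) (u : homT L E) (p : homT E N),
     almost_split rels u p).

Definition is_MRD (rels : seq (seq A)) (M N : rep) (f : homT M N) (C : rep)
  : Prop :=
  isMod rels C /\
  exists (L : rep) (Ls Ns Ps : seq rep),
    intrinsic_kernel rels f L /\
    iso L (bigsum Ls) /\ size Ns = size Ls /\
    (forall k, (k < size Ls)%N ->
       isMod rels (nth zero_rep Ls k) /\ indecomposable (nth zero_rep Ls k) /\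
       isMod rels (nth zero_rep Ns k) /\
       tau_inv rels (nth zero_rep Ls k) (nth zero_rep Ns k)) /\
    (forall k, (k < size Ps)%N -> almost_factors rels f (nth zero_rep Ps k)) /\
    (forall k l, (k < size Ps)%N -> (l < size Ps)%N ->
       iso (nth zero_rep Ps k) (nth zero_rep Ps l) -> k = l) /\
    (forall P, almost_factors rels f P ->
       exists2 k, (k < size Ps)%N & iso P (nth zero_rep Ps k)) /\
    iso C (bigsum (Ns ++ Ps)).

End Reps.

(* Main.v *)
Require Import Defs.
From mathcomp Require Import all_boot all_algebra.
From Stdlib Require Import FunctionalExtensionality.

(* Strategy: build the concrete indecomposable projective
   Pc = P(i) (basis: nonzero paths starting at i), show P is isomorphic to it,
   that End(P(i)) = K (no oriented cycles, via an incidence-matrix rank argument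
   using the tree hypothesis), and derive a contradiction with the
   indecomposability of X from the almost-factoring projective. *)

Module Aux.
Set Implicit Arguments. Unset Strict Implicit. Unset Printing Implicit Defensive.
Import GRing.Theory Num.Theory.
Local Open Scope ring_scope.

Section Graph.
Variables (V A : finType) (s t : A -> V).

Fixpoint wk (x : V) (p : seq A) : bool :=
  if p is a :: p' then (s a == x) && wk (t a) p' else true.
Definition endv (x : V) (p : seq A) : V := last x (map t p).

Lemma endv_cons x a p : endv x (a :: p) = endv (t a) p.
Proof. by []. Qed.

Lemma wk_cat x p q : wk x (p ++ q) = wk x p && wk (endv x p) q.
Proof. by elim: p x => [|a p IH] x //=; rewrite IH andbA. Qed.

Lemma endv_cat x p q : endv x (p ++ q) = endv (endv x p) q.
Proof. by rewrite /endv map_cat last_cat. Qed.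

Lemma wk_rcons x p a : wk x (rcons p a) = wk x p && (s a == endv x p).
Proof. by rewrite -cats1 wk_cat /= andbT. Qed.

Lemma endv_rcons x p a : endv x (rcons p a) = t a.
Proof. by rewrite /endv map_rcons last_rcons. Qed.

Hypothesis tree : is_tree s t.

Definition nV := #|V|.
Definition nA := #|A|.
Definition dV (x : V) : 'rV[rat]_nV := delta_mx 0 (enum_rank x).
Definition incB : 'M[rat]_(nA, nV) :=
  \matrix_(k, w) ((enum_val w == t (enum_val k))%:R - (enum_val w == s (enum_val k))%:R).

Lemma row_incB a : row (enum_rank a) incB = dV (t a) - dV (s a).
Proof.
apply/rowP => w; rewrite !mxE enum_rankK.
by rewrite !eqxx /= -!(inj_eq enum_val_inj) !enum_rankK.
Qed.

Lemma conn_const (f : V -> rat) : (forall a, f (t a) = f (s a)) -> forall x y, f x = f y.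
Proof.
case: tree => conn _ H x y; have /connectP [p pth ->] := conn x y.
elim: p x pth => [|z p IH] x //= /andP [axz /IH <-].
by case/existsP: axz => a /orP [] /andP [/eqP <- /eqP <-]; rewrite H.
Qed.

Lemma incB_free : row_free incB.
Proof.
have [conn card] := tree.
have [x0 _] : exists x0 : V, x0 \in V by apply/card_gt0P; rewrite -card.
have sub : (kermx incB^T <= (const_mx 1 : 'rV[rat]_nV))%MS.
  apply/row_subP => k; set u := row k _.
  have uB : incB *m u^T = 0.
    apply: trmx_inj; rewrite trmx_mul trmxK trmx0; apply/sub_kermxP.
    by rewrite row_sub.
  clearbody u; pose f y := u 0 (enum_rank y).
  have adj : forall a, f (t a) = f (s a).
    move=> a; have := congr1 (row (enum_rank a)) uB.
    rewrite row_mul row_incB row0 mulmxBl /dV -!rowE => /rowP /(_ 0).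
    by rewrite !mxE => /eqP; rewrite subr_eq0 => /eqP.
  have -> : u = f x0 *: const_mx 1.
    apply/rowP => w; rewrite !mxE mulr1 (conn_const adj x0 (enum_val w)) /f.
    by rewrite enum_valK.
  by apply: scalemx_sub.
have h2 := mxrankS sub; rewrite mxrank_ker mxrank_tr in h2.
have h1 := rank_leq_row (const_mx 1 : 'rV[rat]_nV).
have h3 := leq_trans h2 h1; rewrite leq_subLR in h3.
rewrite /row_free eqn_leq rank_leq_row /=.
have e : nV = #|A|.+1 by rewrite /nV card.
by move: h3; rewrite {1}e addn1 ltnS.
Qed.
Lemma tele x c : wk x c -> \sum_(a <- c) (dV (t a) - dV (s a)) = dV (endv x c) - dV x.
Proof.
elim: c x => [|a c IH] x /=; first by rewrite big_nil subrr.
case/andP => /eqP <- /IH; rewrite big_cons endv_cons => ->.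
by rewrite addrC addrA subrK.
Qed.

Lemma no_closed x c : wk x c -> c != [::] -> endv x c = x -> False.
Proof.
case: c => [|a0 c] // wc _ ce.
pose w : 'rV[rat]_nA := \sum_(a <- a0 :: c) delta_mx 0 (enum_rank a).
have wB : w *m incB = 0 *m incB.
  rewrite mul0mx /w mulmx_suml.
  under eq_bigr do rewrite -rowE row_incB.
  by rewrite (tele wc) ce subrr.
have w0 := row_free_inj incB_free wB.
have := congr1 (fun M : 'rV_nA => M 0 (enum_rank a0)) w0.
rewrite /= /w summxE big_cons !mxE eqxx /=.
have -> : \sum_(a <- c) delta_mx (0 : 'I_1) (enum_rank a) 0 (enum_rank a0)
          = (\sum_(a <- c) (a == a0) : nat)%:R :> rat.
  rewrite natr_sum; apply: eq_bigr => a _; rewrite mxE eqxx /=.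
  by rewrite (inj_eq enum_rank_inj) eq_sym.
by rewrite eqxx -natrD => /eqP; rewrite pnatr_eq0.
Qed.

Lemma endv_take x p y : y \in x :: map t p -> exists j, endv x (take j p) = y.
Proof.
elim: p x => [|a p IH] x; first by rewrite inE => /eqP ->; exists 0.
rewrite in_cons => /orP [/eqP ->|]; first by exists 0.
by case/IH => j ej; exists j.+1.
Qed.

Lemma wk_uniq x p : wk x p -> uniq (x :: map t p).
Proof.
elim: p x => [|a p IH] x //= /andP [/eqP sa wp].
have := IH _ wp; rewrite /= => ->; rewrite andbT.
apply/negP => /(@endv_take (t a) p x) [j ej].
apply: (@no_closed x (a :: take j p)) => //=.
rewrite sa eqxx /=.
by move: wp; rewrite -{1}(cat_take_drop j p) wk_cat => /andP [].
Qed.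

Lemma wk_size x p : wk x p -> (size p < nV)%N.
Proof.
move/wk_uniq => u.
have := card_uniqP u; rewrite /= size_map => <-.
exact: max_card.
Qed.
End Graph.

Unset Implicit Arguments. Set Strict Implicit.

Section Trans.
Variables (K : fieldType) (V A : finType) (s t : A -> V).
Variable (Y : rep K s t).
Variable m : nat.

Definition cst (u v : V) (M : 'M[K]_(m, rdim Y u)) : 'M[K]_(m, rdim Y v) :=
  match u =P v with
  | ReflectT e => castmx (erefl m, congr1 (rdim Y) e) M
  | ReflectF _ => 0
  end.

Lemma cst_id u M : cst u u M = M.
Proof.
rewrite /cst; case: eqP => // e.
by rewrite (eq_irrelevance e erefl) castmx_id.
Qed.

Lemma cst_ne u v M : u != v -> cst u v M = 0.
Proof. by rewrite /cst; case: eqP. Qed.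

Lemma cst0 u v : cst u v 0 = 0.
Proof. by rewrite /cst; case: eqP => // e; case: v / e; rewrite castmx_id. Qed.

Definition fam := forall w, 'M[K]_(m, rdim Y w).
Definition step (a : A) (T : fam) : fam := fun w => cst (t a) w (T (s a) *m rmat Y a).
Definition tr (T : fam) (p : seq A) : fam := foldl (fun T a => step a T) T p.
Definition dlt (x : V) (N : 'M[K]_(m, rdim Y x)) : fam := fun w => cst x w N.
Definition fam0 : fam := fun w => 0.

Lemma tr_cat T p q : tr T (p ++ q) = tr (tr T p) q.
Proof. by rewrite /tr foldl_cat. Qed.

Lemma tr_rcons T p a : tr T (rcons p a) = step a (tr T p).
Proof. by rewrite /tr foldl_rcons. Qed.

Lemma step0 a : step a fam0 = fam0.
Proof. by apply: functional_extensionality_dep => w; rewrite /step mul0mx cst0. Qed.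

Lemma tr0 p : tr fam0 p = fam0.
Proof. by elim: p => [|a p IH] //=; rewrite /tr /= step0. Qed.

Lemma dlt0 x : dlt x 0 = fam0.
Proof. by apply: functional_extensionality_dep => w; rewrite /dlt cst0. Qed.

Lemma step_dlt a x N : step a (dlt x N) = dlt (t a) (cst x (s a) N *m rmat Y a).
Proof. by []. Qed.

Lemma step_any a T : step a T = step a (dlt (s a) (T (s a))).
Proof. by rewrite step_dlt cst_id. Qed.

End Trans.
Arguments cst {K V A s t Y m}.
Arguments fam {K V A s t}.
Arguments step {K V A s t Y m}.
Arguments tr {K V A s t Y m}.
Arguments dlt {K V A s t Y m}.
Arguments fam0 {K V A s t}.

Section TransM.
Variables (K : fieldType) (V A : finType) (s t : A -> V).
Variable (Y : rep K s t).

Lemma cstM m n u v (N : 'M[K]_(n, m)) (M : 'M[K]_(m, rdim Y u)) :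
  cst u v (N *m M) = N *m cst u v M.
Proof. by rewrite /cst; case: eqP => [e|_]; [case: v / e; rewrite !castmx_id|rewrite mulmx0]. Qed.

Lemma trM m n (N : 'M[K]_(n, m)) (T : fam Y m) p :
  tr (fun w => N *m T w) p = fun w => N *m tr T p w.
Proof.
elim: p T => [|a p IH] T //=.
rewrite /tr /= -/(tr _ p) -/(tr _ p) -IH; congr tr.
apply: functional_extensionality_dep => w; rewrite /step.
by rewrite -mulmxA cstM.
Qed.

Lemma dltM m n x (N : 'M[K]_(n, m)) (M : 'M[K]_(m, rdim Y x)) :
  dlt x (N *m M) = fun w => N *m dlt x M w.
Proof. by apply: functional_extensionality_dep => w; rewrite /dlt cstM. Qed.

Lemma killed_tr m x (N : 'M[K]_(m, rdim Y x)) p :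
  killed N p <-> (forall w, tr (dlt x N) p w = 0).
Proof.
elim: p x N => [|a p IH] x N /=.
  split; first by move/eqP => -> w; rewrite /dlt cst0.
  by move/(_ x); rewrite /dlt cst_id => ->.
rewrite /tr /= -/(tr _ p) step_dlt.
rewrite /cst; case: (x =P s a) => [e|ne]; first exact: IH.
by rewrite mul0mx dlt0 tr0.
Qed.

Lemma ideal_kill (rels : seq (seq A)) m (T : fam Y m) p :
  [::] \notin rels -> isMod rels Y -> in_ideal rels p -> tr T p = fam0 Y m.
Proof.
move=> nr HY /hasP [r rin /infixP [p1 [p2 ->]]].
rewrite !tr_cat; set T' := tr T p1.
suff -> : tr T' r = fam0 Y m by rewrite tr0.
have := HY r rin; case: r rin => [|a r'] rin; first by rewrite rin in nr.
move=> /killed_tr H.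
have -> : tr T' (a :: r') = tr (dlt (s a) (T' (s a) *m 1%:M)) (a :: r').
  by rewrite mulmx1 /tr /= step_any.
rewrite dltM trM; apply: functional_extensionality_dep => w.
by rewrite H mulmx0.
Qed.

End TransM.

Section Gen.
Variable K : fieldType.
Lemma free_rinv m n (A : 'M[K]_(m,n)) (B : 'M[K]_(n,m)) : A *m B = 1%:M -> row_free A.
Proof.
move=> e; rewrite /row_free eqn_leq rank_leq_row /=.
by have := mxrankM_maxl A B; rewrite e mxrank1.
Qed.

Lemma dim_rinv m n (A : 'M[K]_(m,n)) (B : 'M[K]_(n,m)) : A *m B = 1%:M -> (m <= n)%N.
Proof. by move/free_rinv => /eqP <-; apply: rank_leq_col. Qed.

Lemma free_mul m n p (A : 'M[K]_(m,n)) (B : 'M[K]_(n,p)) :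
  row_free A -> row_free B -> row_free (A *m B).
Proof. by rewrite /row_free => fA fB; rewrite mxrankMfree. Qed.
End Gen.
Arguments free_rinv {K m n A B}.
Arguments dim_rinv {K m n A B}.
Arguments free_mul {K m n p A B}.

Section RepGen.
Variables (K : fieldType) (V A : finType) (s t : A -> V).
Notation rep := (rep K s t).

Lemma hcomp_hom (M N P : rep) (f : homT M N) (g : homT N P) :
  is_hom f -> is_hom g -> is_hom (hcomp f g).
Proof. by move=> hf hg a; rewrite /hcomp mulmxA hf -mulmxA hg mulmxA. Qed.

Lemma iso_comp (M N P : rep) (f : homT M N) (g : homT N P) :
  is_iso_hom f -> is_iso_hom g -> is_iso_hom (hcomp f g).
Proof.
move=> [hf [f' [hf' [e1 e2]]]] [hg [g' [hg' [e3 e4]]]].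
split; first exact: hcomp_hom.
exists (hcomp g' f'); split; first exact: hcomp_hom.
split => v; rewrite /hcomp /hid.
  have := e3 v; have := e1 v; rewrite /hcomp /hid => E1 E3.
  by rewrite mulmxA -(mulmxA (f v)) E3 mulmx1 E1.
have := e2 v; have := e4 v; rewrite /hcomp /hid => E4 E2.
by rewrite mulmxA -(mulmxA (g' v)) E2 mulmx1 E4.
Qed.

Lemma iso_dims (M N : rep) : iso M N -> forall v, rdim M v = rdim N v.
Proof.
move=> [f [_ [g [_ [e1 e2]]]]] v; apply/eqP; rewrite eqn_leq.
by rewrite (dim_rinv (e1 v)) (dim_rinv (e2 v)).
Qed.

Lemma simple_mod rels i : isMod rels (simple_rep K s t i).
Proof.
move=> [|a r] rin //; apply/killed_tr => w.
by rewrite /tr /= step_dlt mulmx0 dlt0 -/(tr _ r) tr0.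
Qed.
End RepGen.
Arguments hcomp_hom {K V A s t M N P f g}.
Arguments iso_comp {K V A s t M N P f g}.
Arguments iso_dims {K V A s t M N}.
Arguments simple_mod {K V A s t}.

Section PcSec.
Variables (K : fieldType) (V A : finType) (s t : A -> V).
Variables (rels : seq (seq A)) (i : V).
Hypothesis Hsz : forall x p, wk s t x p -> (size p < #|V|)%N.
Hypothesis Hac : forall x c, wk s t x c -> c != [::] -> endv t x c = x -> False.
Hypothesis nr : [::] \notin rels.

Fixpoint seqs n : seq (seq A) :=
  if n is n'.+1 then [::] :: [seq a :: p | a <- enum A, p <- seqs n'] else [:: [::]].

Definition okp v p := [&& wk s t i p, endv t i p == v & ~~ in_ideal rels p].
Definition paths v := undup [seq p <- seqs #|V| | okp v p].
Definition NP v := size (paths v).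
Definition Pc : rep K s t := @Rep K V A s t NP
  (fun a => \matrix_(j, k) ((nth [::] (paths (t a)) k == rcons (nth [::] (paths (s a)) j) a)%:R)).
Definition ebas v p : 'rV[K]_(NP v) := \row_k ((nth [::] (paths v) k == p)%:R).

Lemma mem_seqs n p : (p \in seqs n) = (size p <= n)%N.
Proof.
elim: n p => [|n IH] [|a p] //=.
rewrite in_cons /=; apply/allpairsP/idP => [[[b q] /= [_ qin e]]|sz].
  by case: e => _ ->; rewrite ltnS -IH.
by exists (a, p); rewrite mem_enum IH.
Qed.

Lemma mem_paths v p : (p \in paths v) = okp v p.
Proof.
rewrite mem_undup mem_filter mem_seqs andb_idr // => /and3P [w _ _].
by apply: ltnW; apply: Hsz w.
Qed.

Lemma paths_uniq v : uniq (paths v).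
Proof. exact: undup_uniq. Qed.

Lemma ebas_nth v (j : 'I_(NP v)) : ebas v (nth [::] (paths v) j) = delta_mx 0 j.
Proof.
by apply/rowP => k; rewrite !mxE /= (nth_uniq _ _ _ (paths_uniq v)).
Qed.

Lemma ebas_out v p : p \notin paths v -> ebas v p = 0.
Proof.
move=> pn; apply/rowP => k; rewrite !mxE.
case: eqP => // e; case/negP: pn; rewrite -e; exact: mem_nth.
Qed.



Lemma mx_ebas v n (M N : 'M[K]_(NP v, n)) :
  (forall p, p \in paths v -> ebas v p *m M = ebas v p *m N) -> M = N.
Proof.
move=> H; apply/row_matrixP => j; rewrite !rowE -ebas_nth; apply: H.
exact: mem_nth.
Qed.

Lemma ebas_rmat a q :
  ebas (s a) q *m rmat Pc a = if q \in paths (s a) then ebas (t a) (rcons q a) else 0.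
Proof.
case: ifP => qin; last by rewrite ebas_out ?qin // mul0mx.
have lt : (index q (paths (s a)) < NP (s a))%N by rewrite index_mem.
have := @ebas_nth (s a) (Ordinal lt); rewrite /= nth_index // => ->.
rewrite -rowE; apply/rowP => k; rewrite !mxE /=.
by rewrite nth_index.
Qed.

Lemma okp_rcons v q a : okp v (rcons q a) -> v = t a /\ q \in paths (s a).
Proof.
case/and3P => w /eqP e ni; rewrite endv_rcons in e; split => //.
rewrite mem_paths; move: w; rewrite wk_rcons => /andP [w /eqP ->].
rewrite /okp w eqxx /=; apply: contra ni => /hasP [r rin ir]; apply/hasP; exists r => //.
by rewrite -cats1 infix_catr.
Qed.

Lemma nil_in : [::] \in paths i.
Proof.
rewrite mem_paths /okp /= eqxx /=; apply/hasP => [[r rin]].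
by rewrite infixs0 => /eqP rn; move: nr; rewrite -rn rin.
Qed.

Lemma paths_i p : p \in paths i -> p = [::].
Proof.
rewrite mem_paths => /and3P [w /eqP e _]; case: p w e => // a p w e.
by case: (Hac _ _ w _ e).
Qed.

Lemma NP_i : NP i = 1%N.
Proof.
have : all (pred1 [::]) (paths i) by apply/allP => p /paths_i ->.
have := paths_uniq i; have := nil_in; rewrite /NP.
case: (paths i) => [|p [|q l]] //= _ /andP [nq _] /and3P [/eqP pe /eqP qe _].
by move: nq; rewrite pe qe inE eqxx.
Qed.

Lemma nth_i (j : 'I_(NP i)) : nth [::] (paths i) j = [::].
Proof. by apply: paths_i; apply: mem_nth. Qed.

Lemma kill_Pc q x p : in_ideal rels (p ++ q) -> tr (@dlt K V A s t Pc 1 x (ebas x p)) q = fam0 Pc 1.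
Proof.
elim: q x p => [|a q IH] x p.
  rewrite cats0 => H; rewrite ebas_out ?dlt0 // mem_paths /okp H.
  by rewrite !andbF.
move=> H; rewrite /tr /= -/(tr _ q) step_dlt.
case: (x =P s a) => [e|ne]; last by rewrite cst_ne ?mul0mx ?dlt0 ?tr0 //; apply/eqP.
subst x; rewrite cst_id ebas_rmat; case: ifP => _; last by rewrite dlt0 tr0.
by apply: IH; rewrite cat_rcons.
Qed.

Lemma Pc_mod : isMod rels Pc.
Proof.
move=> [|a r'] rin //; apply/killed_tr => w.
apply/row_matrixP => j; rewrite row0 rowE.
rewrite -[X in X = _]/((fun w => delta_mx 0 j *m tr (dlt (s a) 1%:M) (a :: r') w) w).
rewrite -trM -dltM mulmx1 -ebas_nth kill_Pc // ; apply/hasP; exists (a :: r') => //.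
exact: suffix_infix.
Qed.

Section Ext.
Variables (Y : rep K s t) (x : 'rV[K]_(rdim Y i)).
Hypothesis HY : isMod rels Y.

Definition G p : fam Y 1 := tr (dlt i x) p.
Definition ext : homT Pc Y := fun v => \matrix_(j, k) (G (nth [::] (paths v) j) v 0 k).

Lemma ebas_ext v p : p \in paths v -> ebas v p *m ext v = G p v.
Proof.
move=> pin; have lt : (index p (paths v) < NP v)%N by rewrite index_mem.
have := @ebas_nth v (Ordinal lt); rewrite /= nth_index // => ->.
by rewrite -rowE; apply/rowP => k; rewrite !mxE nth_index // [0]ord1.
Qed.

Lemma ext_i : ebas i [::] *m ext i = x.
Proof. by rewrite ebas_ext ?nil_in // /G /= /dlt cst_id. Qed.

Lemma ext_hom : is_hom ext.
Proof.
move=> a; apply: mx_ebas => p pin; rewrite mulmxA ebas_rmat pin mulmxA ebas_ext //.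
have GG : G (rcons p a) (t a) = G p (s a) *m rmat Y a.
  by rewrite /G tr_rcons /step cst_id.
case rin: (rcons p a \in paths (t a)); first by rewrite ebas_ext.
rewrite ebas_out ?rin //.
rewrite mul0mx -GG /G (@ideal_kill K V A s t Y rels 1 (dlt i x) (rcons p a) nr HY) //.
move: rin; rewrite mem_paths /okp endv_rcons eqxx wk_rcons.
move: pin; rewrite mem_paths => /and3P [-> /eqP -> _].
by rewrite eqxx /=; case: (in_ideal _ _).
Qed.
End Ext.

Lemma hom_uniq (Y : rep K s t) (phi psi : homT Pc Y) :
  is_hom phi -> is_hom psi -> ebas i [::] *m phi i = ebas i [::] *m psi i -> heq phi psi.
Proof.
move=> hphi hpsi e0 v; apply: mx_ebas => p; elim/last_ind: p v => [|q a IH] v.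
  by move=> pin; have /and3P [_ /eqP <- _] : okp v [::] by rewrite -mem_paths.
rewrite mem_paths => /okp_rcons [-> qin].
have <- : ebas (s a) q *m rmat Pc a = ebas (t a) (rcons q a) by rewrite ebas_rmat qin.
by rewrite -!mulmxA hphi hpsi !mulmxA IH.
Qed.

Lemma j0_lt : (index [::] (paths i) < NP i)%N.
Proof. by rewrite index_mem nil_in. Qed.
Definition j0 : 'I_(NP i) := Ordinal j0_lt.

Lemma ord_i (k : 'I_(NP i)) : k = j0.
Proof.
apply: val_inj => /=; have := ltn_ord k; have := j0_lt.
move: (nat_of_ord k) (index _ _); rewrite NP_i => a b.
by rewrite !ltnS !leqn0 => /eqP -> /eqP ->.
Qed.

Lemma ebas_neq0 v p : p \in paths v -> ebas v p != 0.
Proof.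
move=> pin; have lt : (index p (paths v) < NP v)%N by rewrite index_mem.
apply/eqP => /rowP /(_ (Ordinal lt)); rewrite !mxE /= nth_index // eqxx.
by move/eqP; rewrite oner_eq0.
Qed.

Definition can : homT Pc (simple_rep K s t i) :=
  fun v => \matrix_(j, k) ((nth [::] (paths v) j == [::])%:R).

Lemma can_hom : is_hom can.
Proof.
move=> a; rewrite /= mulmx0; apply/matrixP => j k; rewrite !mxE.
apply: big1 => l _; rewrite !mxE; case: eqP => [->|]; last by rewrite mul0r.
by case: (nth _ _ _) => [|b q] /=; rewrite mulr0.
Qed.

Lemma can_i_neq0 : can i != 0.
Proof.
have k0lt : (0 < nat_of_bool (i == i))%N by rewrite eqxx.
apply/eqP => /matrixP /(_ j0 (Ordinal k0lt)); rewrite !mxE /= nth_index ?nil_in // eqxx.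
by move/eqP; rewrite oner_eq0.
Qed.

Lemma can_epi : epi can.
Proof.
move=> v; rewrite /row_full eqn_leq rank_leq_col /=.
have [e|ne] : v = i \/ v <> i by case: (v =P i); [left|right].
  subst v; apply: leq_trans (leq_b1 _) _; by rewrite lt0n mxrank_eq0 can_i_neq0.
have H : forall M : 'M[K]_(NP v, nat_of_bool (v == i)), (nat_of_bool (v == i) <= \rank M)%N.
  by rewrite (_ : (v == i) = false) //; apply/eqP.
exact: H.
Qed.

Lemma can_free_i : row_free (can i).
Proof.
rewrite /row_free eqn_leq rank_leq_row /=.
apply: leq_trans (_ : 1 <= _)%N; first by rewrite NP_i.
by rewrite lt0n mxrank_eq0 can_i_neq0.
Qed.

Lemma hid_hom (M : rep K s t) : is_hom (hid M).
Proof. by move=> a; rewrite /hid mulmx1 mul1mx. Qed.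

Lemma scal_hom (M : rep K s t) c : is_hom (fun v => c *: (1%:M : 'M[K]_(rdim M v))).
Proof. by move=> a; rewrite -scalemxAr mulmx1 -scalemxAl mul1mx. Qed.

Lemma Pc_iso (P : rep K s t) : is_Pi rels i P ->
  exists (al : homT P Pc) (be : homT Pc P), [/\ is_hom al, is_hom be,
    heq (hcomp al be) (hid P) & heq (hcomp be al) (hid Pc)].
Proof.
move=> [HPm [HPind [HPproj [pi [hpi npi]]]]].
have [v vnz] : exists v, pi v != 0.
  case: (boolP [exists v, pi v != 0]) => [/existsP //|/existsPn H].
  by case: npi => v; apply/eqP; move: (H v); rewrite negbK.
have vi : v = i.
  have H : forall M : 'M[K]_(rdim P v, nat_of_bool (v == i)), M != 0 -> v = i.
    case: (v =P i) => // ne M.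
    by rewrite (thinmx0 M) eqxx.
  exact: H vnz.
subst v.
have pfull : row_full (pi i).
  rewrite /row_full eqn_leq rank_leq_col /=; apply: leq_trans (leq_b1 _) _.
  by rewrite lt0n mxrank_eq0.
have [al [hal eal]] := HPproj _ _ can pi Pc_mod (simple_mod rels i) can_hom hpi can_epi.
pose x := ebas i [::] *m can i *m pinvmx (pi i).
pose be := ext P x.
have hbe := ext_hom P x HPm.
have xal : x *m al i = ebas i [::].
  apply: (row_free_inj can_free_i) => /=; rewrite -mulmxA.
  have := eal i; rewrite /hcomp => ->.
  by rewrite mulmxKpV //; apply: submx_full.
have ba : heq (hcomp be al) (hid Pc).
  apply: hom_uniq; [exact: hcomp_hom | exact: hid_hom | ].
  by rewrite /hcomp /hid mulmxA ext_i xal mulmx1.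
have idem : heq (hcomp (hcomp al be) (hcomp al be)) (hcomp al be).
  move=> w; have := ba w; rewrite /hcomp /hid => E.
  by rewrite mulmxA -(mulmxA (al w) (be w) (al w)) E mulmx1.
case: (HPind.2 _ (hcomp_hom hal hbe) idem) => [z|ab].
  exfalso; have := ba i; rewrite /hcomp /hid => E.
  have : (1%:M : 'M[K]_(NP i)) = 0.
    rewrite -E; have -> : be i *m al i = (be i *m al i) *m (be i *m al i).
      by rewrite E mulmx1.
    rewrite mulmxA -(mulmxA (be i) (al i) (be i)).
    by have := z i; rewrite /hcomp /hzero => ->; rewrite mulmx0 mul0mx.
  move/(congr1 (mulmx (ebas i [::]))); rewrite mulmx1 mulmx0 => /eqP.
  by rewrite (negbTE (ebas_neq0 _ _ nil_in)).
by exists al, be.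
Qed.

Lemma End_Pc (h : homT Pc Pc) : is_hom h ->
  exists c, heq h (fun v => c *: (1%:M : 'M[K]_(NP v))).
Proof.
move=> hh; exists ((ebas i [::] *m h i) 0 j0).
apply: hom_uniq => //; first exact: (scal_hom Pc).
apply/rowP => k; rewrite -scalemxAr mulmx1 !mxE nth_i eqxx mulr1.
by rewrite (ord_i k).
Qed.

Lemma zr m n (M : 'M[K]_(m,n)) : m = 0%N -> M = 0.
Proof. by move=> e; move: M; rewrite e => M; rewrite flatmx0. Qed.

Hypothesis Hr2 : forall r, r \in rels -> (2 <= size r)%N.

Lemma single_in a : s a = i -> [:: a] \in paths (t a).
Proof.
move=> sa; rewrite mem_paths /okp /= sa !eqxx /=; apply/hasP => [[r rin ir]].
by have := leq_trans (Hr2 _ rin) (size_infix ir).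
Qed.

Section Core.
Variables (a1 a2 : A).
Hypotheses (a12 : a1 != a2) (sa1 : s a1 = i) (sa2 : s a2 = i).

Definition D1 v : 'M[K]_(NP v) :=
  \matrix_(j, k) (((j == k) && (ohead (nth [::] (paths v) j) == Some a1))%:R).

Lemma ebas_D1 v p : ebas v p *m D1 v = (ohead p == Some a1)%:R *: ebas v p.
Proof.
case pin: (p \in paths v); last by rewrite ebas_out ?pin // mul0mx scaler0.
have lt : (index p (paths v) < NP v)%N by rewrite index_mem.
have := @ebas_nth v (Ordinal lt); rewrite /= nth_index // => ->.
rewrite -rowE; apply/rowP => k; rewrite !mxE /= nth_index //.
by rewrite eq_sym; case: (k == _); case: (ohead p == _); rewrite ?mulr1 ?mulr0.
Qed.

Lemma D1D1 v : D1 v *m D1 v = D1 v.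
Proof.
apply: mx_ebas => p pin; rewrite mulmxA !ebas_D1 -scalemxAl ebas_D1 scalerA.
by case: (ohead p == Some a1); rewrite ?mulr1 ?mulr0.
Qed.

Lemma D1_comm a : s a != i -> rmat Pc a *m D1 (t a) = D1 (s a) *m rmat Pc a.
Proof.
move=> ne; apply: mx_ebas => p pin.
rewrite !mulmxA ebas_rmat pin ebas_D1 -scalemxAl ebas_rmat pin.
case: p pin => [|b p] pin; last by rewrite ebas_D1 rcons_cons.
by move: pin ne; rewrite mem_paths => /and3P [_ /eqP <- _]; rewrite eqxx.
Qed.

Lemma core (P X : rep K s t) (f : homT X P) (h : homT P P) :
  is_Pi rels i P -> isMod rels X -> indecomposable X -> is_hom f -> mono f ->
  ~ split_epi f -> is_hom h -> (forall a, (rmat P a *m h (t a) <= f (t a))%MS) ->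
  (exists v, ~~ (h v <= f v)%MS) -> False.
Proof.
move=> HPi HX HXind hf mf nse hh R1 [v0 R2].
have [al [be [hal hbe ab ba]]] := Pc_iso P HPi.
have [c hc] := End_Pc _ (hcomp_hom hbe (hcomp_hom hh hal)).
have hcid : forall v, h v = c *: 1%:M.
  move=> v; have E1 := ab v; have E2 := hc v; rewrite /hcomp /hid in E1 E2.
  have <- : al v *m (be v *m (h v *m al v)) *m be v = h v.
    by rewrite !mulmxA E1 mul1mx -mulmxA E1 mulmx1.
  by rewrite E2 -scalemxAr mulmx1 -scalemxAl E1.
have c0 : c != 0.
  apply/negP => /eqP c0; case/negP: R2; by rewrite hcid c0 scale0r sub0mx.
have radP : forall a, (rmat P a <= f (t a))%MS.
  move=> a; have := scalemx_sub c^-1 (R1 a).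
  by rewrite hcid -scalemxAr mulmx1 scalerA mulVf // scale1r.
pose f' := hcomp f al.
have hf' : is_hom f' := hcomp_hom hf hal.
have mf' : mono f' by move=> v; apply: free_mul (mf v) (free_rinv (ab v)).
have radPc : forall a, (rmat Pc a <= f' (t a))%MS.
  move=> a; have E := ba (t a); rewrite /hcomp /hid in E.
  rewrite -[rmat Pc a]mulmx1 -E mulmxA (hbe a) -mulmxA.
  apply: submx_trans (submxMl _ _) _; exact: submxMr.
have ebas_rad : forall v p, p \in paths v -> p != [::] -> (ebas v p <= f' v)%MS.
  move=> v p; case/lastP: p => [|q a] // pin _.
  move: pin; rewrite mem_paths => /okp_rcons [-> qin].
  rewrite -[ebas _ _]/(ebas (t a) (rcons q a)).
  have <- : ebas (s a) q *m rmat Pc a = ebas (t a) (rcons q a) by rewrite ebas_rmat qin.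
  exact: submx_trans (submxMl _ _) (radPc a).
have full_ne : forall v, v != i -> row_full (f' v).
  move=> v ne; rewrite -sub1mx; apply/row_subP => j; rewrite row1 -ebas_nth.
  apply: ebas_rad; first exact: mem_nth.
  apply/eqP => e; move: (mem_nth [::] (ltn_ord j)); rewrite e mem_paths.
  by case/and3P => _ /eqP ei _; move: ne; rewrite -ei eqxx.
have nfull : ~ row_full (f' i).
  move=> fi.
  have fullv : forall v, row_full (f' v).
    by move=> v; case: (v =P i) => [->|/eqP]; [exact: fi|exact: full_ne].
  have [g [gf fg]] : exists g : homT Pc X,
      (forall v, g v *m f' v = 1%:M) /\ (forall v, f' v *m g v = 1%:M).
    exists (fun v => pinvmx (f' v)).
    have gf : forall v, pinvmx (f' v) *m f' v = 1%:M.
      by move=> v; rewrite -{1}(mul1mx (pinvmx _)) mulmxKpV // sub1mx.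
    split => // v; apply: (row_free_inj (mf' v)) => /=.
    by rewrite -mulmxA gf mulmx1 mul1mx.
  have hg : is_hom g.
    move=> a; rewrite -[RHS]mulmx1 -(fg (t a)) mulmxA -(mulmxA (g (s a))) hf'.
    by rewrite mulmxA gf mul1mx.
  apply: nse; exists (hcomp al g); split; first exact: hcomp_hom.
  move=> v; have E := ab v; rewrite /hcomp /hid in E *.
  rewrite -mulmxA -[f v]mulmx1 -E mulmxA.
  have := gf v; rewrite /f' /hcomp => G.
  rewrite !mulmxA -(mulmxA (al v *m g v) (f v) (al v)) -(mulmxA (al v) (g v)).
  by rewrite G mulmx1.
have fi0 : f' i = 0.
  apply/eqP; rewrite -mxrank_eq0 -leqn0.
  have : (\rank (f' i) < NP i)%N.
    by rewrite ltn_neqAle rank_leq_col andbT; apply/negP => /eqP e; apply: nfull; rewrite /row_full e.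
  by rewrite NP_i ltnS.
have dXi : rdim X i = 0%N.
  by have := mf' i; rewrite /row_free fi0 mxrank0 => /eqP <-.
pose e : homT X X := fun v => f' v *m D1 v *m pinvmx (f' v).
have ef : forall v, e v *m f' v = f' v *m D1 v.
  move=> v; rewrite /e mulmxKpV //.
  case: (v =P i) => [->|/eqP ne]; first by rewrite fi0 mul0mx sub0mx.
  exact: submx_full (full_ne _ ne).
have he : is_hom e.
  move=> a; apply: (row_free_inj (mf' (t a))) => /=.
  case: (s a =P i) => [sai|/eqP ne].
    by rewrite [LHS]zr ?[RHS]zr // sai.
  rewrite -mulmxA (ef (t a)) mulmxA (hf' a) -mulmxA (D1_comm _ ne).
  rewrite -(mulmxA (e (s a))) (hf' a).
  by rewrite [RHS]mulmxA (ef (s a)) mulmxA.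
have idem : heq (hcomp e e) e.
  move=> v; apply: (row_free_inj (mf' v)) => /=; rewrite /hcomp.
  by rewrite -mulmxA !(ef v) mulmxA (ef v) -mulmxA (D1D1 v).
have ebD : forall v p y, ebas v p = y *m f' v -> ebas v p *m D1 v = y *m (e v *m f' v).
  by move=> w q y E; rewrite E -mulmxA (ef w).
case: (HXind.2 e he idem) => [z|o].
  have pin := single_in _ sa1; have /submxP [y ey] := ebas_rad _ _ pin isT.
  have := ebD _ _ _ ey; rewrite z /hzero mul0mx mulmx0 ebas_D1 /= eqxx scale1r => /eqP.
  by rewrite (negbTE (ebas_neq0 _ _ pin)).
have pin := single_in _ sa2; have /submxP [y ey] := ebas_rad _ _ pin isT.
have := ebD _ _ _ ey; rewrite o /hid mul1mx -ey ebas_D1 /=.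
rewrite (_ : (Some a2 == Some a1) = false) ?scale0r; last by apply/eqP => [[e2]]; move: a12; rewrite e2 eqxx.
by move/eqP; rewrite eq_sym (negbTE (ebas_neq0 _ _ pin)).
Qed.

End Core.

End PcSec.


End Aux.
Import Aux.

Theorem lemma3p8 (K : fieldType) (V A : finType) (s t : A -> V)
  (rels : seq (seq A)) :
  admissible_or_zero s t rels -> string_algebra s t rels -> is_tree s t ->
  forall i : V, #|[set a | s a == i]| = 2 ->
  forall (P X : rep K s t) (f : homT X P),
    is_Pi rels i P -> isMod rels X -> indecomposable X ->
    is_hom f -> mono f -> irreducible rels f ->
    forall C : rep K s t, is_MRD rels f C -> ~ iso P C.
Proof.
Open Scope ring_scope.
Import GRing.Theory Num.Theory.

move=> Hadm _ Htree i Hi2 P X f HPi HX HXind hf mf Hirr C HC Hiso.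
have Hr2 : forall r, r \in rels -> (2 <= size r)%N.
  case: Hadm => [-> //|[H _]] r rin; by case/andP: (H r rin).
have nr : [::] \notin rels by apply/negP => /Hr2.
have Hsz : forall x p, wk s t x p -> (size p < #|V|)%N.
  by move=> x p w; apply: (wk_size Htree w).
have Hac : forall x c, wk s t x c -> c != [::] -> endv t x c = x -> False.
  by move=> x c w cn ce; apply: (no_closed Htree w cn ce).
have [a1 [a2 [a12 sa1 sa2]]] : exists a1 a2, [/\ a1 != a2, s a1 = i & s a2 = i].
  have /cards2P [a1 [a2 [ne E]]] : #|[set a | s a == i]| == 2 by rewrite Hi2.
  exists a1, a2; split => //; apply/eqP.
    by move/setP: E => /(_ a1); rewrite !inE eqxx => ->.
  by move/setP: E => /(_ a2); rewrite !inE eqxx orbT => ->.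
case: HC => _ [L [Ls [Ns [Ps [Hik [HLs [Hsize [HN [HPs [_ [_ HCiso]]]]]]]]]]].
have dimL : forall v, rdim L v = 0%N.
  case: Hik => _ [B1 [B2 [phi [k [_ [_ [Hphi [_ [_ [hk [mk [kF _]]]]]]]]]]]] v.
  have Ffree : row_free (row_mx 0 1%:M *m (phi v *m f v)).
    apply: free_mul; last apply: free_mul (mf v).
      by apply: (@free_rinv _ _ _ _ (col_mx 0 1%:M)); rewrite mul_row_col mul0mx mulmx1 add0r.
    by case: Hphi => _ [g [_ [e1 _]]]; apply: (free_rinv (e1 v)).
  have k0 : k v = 0.
    apply: (row_free_inj Ffree); rewrite /= mul0mx.
    exact: (kF v).
  by have := mk v; rewrite /row_free k0 mxrank0 => /eqP <-.
have Ls0 : Ls = [::].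
  case: Ls HLs HN Hsize => [//|Q Ls'] HLs HN _.
  have [_ [[[v Qv] _] _]] := HN 0%N isT.
  have := iso_dims HLs v; rewrite dimL /= => /esym /eqP.
  by rewrite addn_eq0 eqn0Ngt Qv.
subst Ls; case: Ns Hsize HN HCiso => // _ _ HCiso.
case: Ps HPs HCiso => [|Q rest] HPs HCiso.
  have [_ [[[v Pv] _] _]] := HPi.
  have := iso_dims Hiso v; rewrite (iso_dims HCiso v) /= => Pv0.
  by rewrite Pv0 in Pv.
have [HQm [HQind [HQproj [R [iota [hQ [g [HRm [[hiota [miota [radQ _]]] [hhQ [hg [Heq [v0 Hv0]]]]]]]]]]]]] := HPs 0%N isT.
case: Hiso => sg Hsg; case: HCiso => tau Htau.
have [hs' [si [hsi [e1 e2]]]] := iso_comp Hsg Htau.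
set s' := hcomp sg tau in hs' e1 e2.
pose sQ : homT P Q := fun v => s' v *m col_mx 1%:M 0.
have hsQ : is_hom sQ.
  move=> a; rewrite /sQ mulmxA (hs' a) -!mulmxA; congr (_ *m _).
  rewrite /= mul_block_col mulmx1 mul0mx mulmx0 !addr0 mul_col_mx mul1mx mul0mx.
  by rewrite mul0mx.
pose h := hcomp sQ hQ.
have hh : is_hom h := hcomp_hom hsQ hhQ.
have R1 : forall a, (rmat P a *m h (t a) <= f (t a))%MS.
  move=> a; rewrite /h /hcomp mulmxA (hsQ a) -mulmxA.
  apply: submx_trans (submxMl _ _) _.
  apply: submx_trans (submxMr _ (radQ a)) _.
  have := Heq (t a); rewrite /hcomp => ->; exact: submxMl.
have R2 : exists v, ~~ (h v <= f v)%MS.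
  exists v0; apply: contra Hv0 => H; apply: submx_trans H.
  apply/submxP; exists (row_mx 1%:M 0 *m si v0).
  rewrite /h /hcomp /sQ !mulmxA -(mulmxA _ (si v0)).
  have E := e2 v0; rewrite /s' /hcomp /hid in E.
  rewrite -(mulmxA (row_mx 1%:M 0)) -(mulmxA (si v0)) E.
  by rewrite mulmx1 mul_row_col mulmx1 mul0mx addr0 mul1mx.
case: Hirr => _ [nse _].
exact: (@core K V A s t rels i Hsz Hac nr Hr2 a1 a2 a12 sa1 sa2 P X f h HPi HX HXind hf mf nse hh R1 R2).
Qed.
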